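(* For every prae-dilator $T$, the linear order $\operatorname{BH}(T)$ is a Bachmann-Howard fixed point of $T$, i.e. there exists a Bachmann-Howard collapse $\vartheta:T_{\operatorname{BH}(T)}\to\operatorname{BH}(T)$.
   Context: The finite subset functor $[\cdot]^{<\omega}$ sends a set $X$ to the set of its finite subsets and a function $f$ to $[f]^{<\omega}(a)=\{f(x)\mid x\in a\}$; subsets of linear orders are regarded as suborders. A prae-dilator consists of an endofunctor $X\mapsto T_X$ on the category of linear orders (morphisms: order embeddings) and a natural transformation $\operatorname{supp}^T:T\Rightarrow[\cdot]^{<\omega}$ such that for every linear order $X$ and every $\sigma\in T_X$ we have $\sigma\in\operatorname{rng}(T_{\iota_\sigma})$, where $\iota_\sigma:\operatorname{supp}^T_X(\sigma)\hookrightarrow X$ is the inclusion. For a linear order $Z$ and finite $a,b\subseteq Z$ write $a<^{\operatorname{fin}}_Z b$ iff for every $s\in a$ there is $t\in b$ with $s<_Z t$; $\leq^{\operatorname{fin}}_Z$ is defined analogously with $\leq_Z$; singletons $\{s\}$ are written $s$. A function $\vartheta:T_Y\to Y$ ($Y$ a linear order) is a Bachmann-Howard collapse if for all $\sigma,\tau\in T_Y$: (1) if $\sigma<_{T_Y}\tau$ and $\operatorname{supp}^T_Y(\sigma)<^{\operatorname{fin}}_Y\vartheta(\tau)$ then $\vartheta(\sigma)<_Y\vartheta(\tau)$; (2) $\operatorname{supp}^T_Y(\sigma)<^{\operatorname{fin}}_Y\vartheta(\sigma)$. If such a function exists, $Y$ is a Bachmann-Howard fixed point of $T$. Construction of $\operatorname{BH}(T)$: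 for a linear order $X$ let $\vartheta_T(X)$ be the set of formal terms $\vartheta\sigma$ with $\sigma\in T_X$. A Bachmann-Howard system is a triple $(X,\iota_X,L_X)$ with $X$ a linear order, $\iota_X:X\to\vartheta_T(X)$ and $L_X:X\to\omega$ functions, such that $L_{\vartheta_T(X)}\circ\iota_X=L_X$, where $L_{\vartheta_T(X)}(\vartheta\sigma):=\max\{L_X(x)\mid x\in\operatorname{supp}^T_X(\sigma)\}+1$ (maximum of the empty set is $0$). For such a system define the linear order $\vartheta\sigma<_{\vartheta_T(X)}\vartheta\tau$ by recursion on $L_{\vartheta_T(X)}(\vartheta\sigma)+L_{\vartheta_T(X)}(\vartheta\tau)$ to hold iff either (a) $\sigma<_{T_X}\tau$ and $[\iota_X]^{<\omega}(\operatorname{supp}^T_X(\sigma))<^{\operatorname{fin}}_{\vartheta_T(X)}\vartheta\tau$, or (b) $\tau<_{T_X}\sigma$ and $\vartheta\sigma\leq^{\operatorname{fin}}_{\vartheta_T(X)}[\iota_X]^{<\omega}(\operatorname{supp}^T_X(\tau))$. The system is good if $\iota_X$ is an order embedding; then define $\iota_{\vartheta_T(X)}(\vartheta\sigma)=\vartheta\,T_{\iota_X}(\sigma)$, and $(\vartheta_T(X),\iota_{\vartheta_T(X)},L_{\vartheta_T(X)})$ is again a good Bachmann-Howard system. Let $(X_0,\iota_{X_0},L_{X_0})=(\emptyset,\emptyset,\emptyset)$ and $(X_{n+1},\iota_{X_{n+1}},L_{X_{n+1}})=(\vartheta_T(X_n),\iota_{\vartheta_T(X_n)},L_{\vartheta_T(X_n)})$.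 Then $\operatorname{BH}(T)$ is the direct limit of the linear orders $X_n$ along the order embeddings $\iota_{X_n}:X_n\to X_{n+1}$. *)

(* Defs.v *)
From Stdlib Require Import List ClassicalEpsilon ProofIrrelevance.
Import ListNotations.

Set Implicit Arguments.

Record strict_linear {A : Type} (R : A -> A -> Prop) : Prop := {
  sl_irrefl : forall x, ~ R x x;
  sl_trans : forall x y z, R x y -> R y z -> R x z;
  sl_total : forall x y, R x y \/ x = y \/ R y x }.

Record LO := mkLO { car :> Type; olt : car -> car -> Prop; olt_linear : strict_linear olt }.
Arguments olt {_}.

Record emb (X Y : LO) := mkEmb {
  emb_fun :> X -> Y;
  emb_spec : forall x y, olt x y <-> olt (emb_fun x) (emb_fun y) }.

Definition emb_id (X : LO) : emb X X :=
  @mkEmb X X (fun x => x) (fun x y => iff_refl _).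

Definition emb_comp (X Y Z : LO) (g : emb Y Z) (f : emb X Y) : emb X Z :=
  @mkEmb X Z (fun x => g (f x))
    (fun x y => iff_trans (emb_spec f x y) (emb_spec g (f x) (f y))).

Definition sub_lt (X : LO) (P : X -> Prop) (a b : {x : X | P x}) : Prop :=
  olt (proj1_sig a) (proj1_sig b).

Lemma sub_lt_linear (X : LO) (P : X -> Prop) : strict_linear (@sub_lt X P).
Proof.
  destruct (olt_linear X) as [Hi Ht Hto].
  split.
  - intros [x px]; unfold sub_lt; simpl; apply Hi.
  - intros [x px] [y py] [z pz]; unfold sub_lt; simpl; apply Ht.
  - intros [x px] [y py]; unfold sub_lt; simpl.
    destruct (Hto x y) as [H|[H|H]]; auto.
    right; left; subst y; f_equal; apply proof_irrelevance.
Qed.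

Definition subLO (X : LO) (P : X -> Prop) : LO :=
  @mkLO {x : X | P x} (@sub_lt X P) (@sub_lt_linear X P).

Definition sub_incl (X : LO) (P : X -> Prop) : emb (subLO X P) X :=
  @mkEmb (subLO X P) X (fun a => proj1_sig a) (fun a b => iff_refl _).

Lemma empty_linear : strict_linear (fun x y : Empty_set => False).
Proof. split; intros x; destruct x. Qed.

Definition emptyLO : LO := @mkLO Empty_set (fun _ _ => False) empty_linear.

(** Finite subsets of [Z] are presented by lists; only membership is ever used. *)
Definition fin_lt (A : Type) (R : A -> A -> Prop) (a b : list A) : Prop :=
  forall s, In s a -> exists t, In t b /\ R s t.
Definition fin_le (A : Type) (R : A -> A -> Prop) (a b : list A) : Prop :=
  forall s, In s a -> exists t, In t b /\ (s = t \/ R s t).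

Record PraeDilator := {
  Tob :> LO -> LO;
  Tmap : forall X Y : LO, emb X Y -> emb (Tob X) (Tob Y);
  Tmap_id : forall (X : LO) (s : Tob X), Tmap (emb_id X) s = s;
  Tmap_comp : forall (X Y Z : LO) (f : emb X Y) (g : emb Y Z) (s : Tob X),
      Tmap (emb_comp g f) s = Tmap g (Tmap f s);
  supp : forall X : LO, Tob X -> list X;
  supp_nat : forall (X Y : LO) (f : emb X Y) (s : Tob X) (y : Y),
      In y (supp Y (Tmap f s)) <-> exists x, In x (supp X s) /\ f x = y;
  supp_cond : forall (X : LO) (s : Tob X),
      exists t : Tob (subLO X (fun x => In x (supp X s))),
        Tmap (@sub_incl X (fun x => In x (supp X s))) t = s }.

Arguments Tmap p {X Y} f.
Arguments supp p {X} s.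

Definition BH_collapse (T : PraeDilator) (Y : LO) (th : T Y -> Y) : Prop :=
  (forall s t : T Y, olt s t -> fin_lt olt (supp T s) [th t] -> olt (th s) (th t)) /\
  (forall s : T Y, fin_lt olt (supp T s) [th s]).

Definition BH_fixed_point (T : PraeDilator) (Y : LO) : Prop :=
  exists th : T Y -> Y, BH_collapse T Y th.

Section Construction.
Unset Implicit Arguments.
Variable T : PraeDilator.

Definition maxl (l : list nat) : nat := fold_right Nat.max 0 l.

Section Theta.
Variables (X : LO) (io : X -> T X) (L : X -> nat).

(** L_{theta_T(X)}(theta s) = max { L_X(x) | x in supp s } + 1 ; the formal term
    theta s is represented by s itself. *)
Definition Ltheta (s : T X) : nat := S (maxl (map L (supp T s))).

(** The order on theta_T(X), defined by recursion on L(theta s) + L(theta t);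
    [vr k] is the recursion with [k] units of fuel. *)
Fixpoint vr (k : nat) (s t : T X) : Prop :=
  match k with
  | 0 => False
  | S k' =>
      (olt s t /\ fin_lt (vr k') (map io (supp T s)) [t]) \/
      (olt t s /\ fin_le (vr k') [s] (map io (supp T t)))
  end.

Definition vrel (s t : T X) : Prop := vr (Ltheta s + Ltheta t) s t.

Record good_sys : Prop := {
  gs_L : forall x, Ltheta (io x) = L x;
  gs_emb : forall x y, olt x y <-> vrel (io x) (io y) }.
End Theta.

Record GBH := { gX : LO; gio : gX -> T gX; gL : gX -> nat; ggood : @good_sys gX gio gL }.

Definition vrelS (B : GBH) := vrel (gX B) (gio B) (gL B).

Definition thetaLO (B : GBH) (H : strict_linear (vrelS B)) : LO :=
  @mkLO (T (gX B)) (vrelS B) H.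

Definition ioemb (B : GBH) H : emb (gX B) (thetaLO B H) :=
  @mkEmb (gX B) (thetaLO B H) (gio B) (gs_emb _ _ _ (ggood B)).

Definition nio (B : GBH) H : thetaLO B H -> T (thetaLO B H) := Tmap T (ioemb B H).
Definition nL (B : GBH) H : thetaLO B H -> nat := Ltheta (gX B) (gL B).

(* The step X |-> theta_T(X).  By the paper, the side conditions tested below
   always hold; the fallback branches (which keep the old stage) never fire. *)
Definition step2 (B : GBH) H
  (q : {@good_sys _ (nio B H) (nL B H)} + {~ @good_sys _ (nio B H) (nL B H)}) : GBH :=
  match q with
  | left G => @Build_GBH (thetaLO B H) (nio B H) (nL B H) G
  | right _ => B
  end.

Definition conn2 (B : GBH) H q : gX B -> gX (@step2 B H q) :=
  match q as q0 return gX B -> gX (@step2 B H q0) with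
  | left _ => @gio B
  | right _ => fun x => x
  end.

Definition step1 (B : GBH)
  (p : {strict_linear (vrelS B)} + {~ strict_linear (vrelS B)}) : GBH :=
  match p with
  | left H => @step2 B H (excluded_middle_informative _)
  | right _ => B
  end.

Definition conn1 (B : GBH) p : gX B -> gX (@step1 B p) :=
  match p as p0 return gX B -> gX (@step1 B p0) with
  | left H => @conn2 B H (excluded_middle_informative _)
  | right _ => fun x => x
  end.

Definition step (B : GBH) : GBH := step1 B (excluded_middle_informative _).
Definition conn (B : GBH) : gX B -> gX (step B) := conn1 B (excluded_middle_informative _).

Definition good0 : @good_sys emptyLO (fun x : Empty_set => match x with end)
                                            (fun x : Empty_set => match x with end).
Proof. split; intros x; destruct x. Qed.

Definition stage0 : GBH := @Build_GBH emptyLO _ _ good0.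

Fixpoint stage (n : nat) : GBH :=
  match n with 0 => stage0 | S m => step (stage m) end.

Inductive lifts (n : nat) (x : gX (stage n)) : forall k, gX (stage k) -> Prop :=
  | lifts_refl : lifts n x n x
  | lifts_step : forall k (y : gX (stage k)),
      lifts n x k y -> lifts n x (S k) (conn (stage k) y).

(** Direct limit: each class is represented by its unique element at the least
    stage where it occurs (not in the image of the previous iota). *)
Definition fresh (n : nat) : gX (stage n) -> Prop :=
  match n as n0 return gX (stage n0) -> Prop with
  | 0 => fun _ => True
  | S m => fun x => forall y, conn (stage m) y <> x
  end.

Definition BHcar : Type :=
  { p : { n : nat & gX (stage n) } | fresh (projT1 p) (projT2 p) }.

Definition BHlt (a b : BHcar) : Prop :=
  exists k (x y : gX (stage k)),
    lifts (projT1 (proj1_sig a)) (projT2 (proj1_sig a)) k x /\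
    lifts (projT1 (proj1_sig b)) (projT2 (proj1_sig b)) k y /\ olt x y.

(** BH(T); the paper shows the direct limit is a linear order, so the
    fallback branch never fires. *)
Definition BH : LO :=
  match excluded_middle_informative (strict_linear BHlt) with
  | left H => @mkLO BHcar BHlt H
  | right _ => emptyLO
  end.

End Construction.

(* Main.v *)
Require Import Defs.
From Stdlib Require Import Arith List Lia Classical ClassicalEpsilon ProofIrrelevance FunctionalExtensionality Eqdep_dec.
Import ListNotations.

Lemma maxl_ge : forall l x, In x l -> x <= maxl l.
Proof. induction l; simpl; intros x H; [contradiction|]. destruct H; subst; [lia|]. specialize (IHl _ H); lia. Qed.

Lemma maxl_in : forall l, maxl l = 0 \/ In (maxl l) l.
Proof. induction l; simpl; auto. destruct (Nat.le_ge_cases a (maxl l)) as [h|h].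
  - rewrite (Nat.max_r _ _ h). destruct IHl; auto.
  - rewrite (Nat.max_l _ _ h); auto. Qed.

Lemma maxl_set : forall l l', (forall v, In v l -> In v l') -> maxl l <= maxl l'.
Proof. intros l l' H. destruct (maxl_in l) as [E|E]; [lia|]. apply maxl_ge, H, E. Qed.

Lemma emb_inj (X Y : LO) (f : emb X Y) x y : f x = f y -> x = y.
Proof. intros E. destruct (sl_total (olt_linear X) x y) as [h|[h|h]]; auto;
  apply (emb_spec f) in h; rewrite E in h; exfalso; exact (sl_irrefl (olt_linear Y) _ h). Qed.

Section Gen.
Variable T : PraeDilator.
Variables (X : LO) (io : X -> T X) (L : X -> nat).
Hypothesis HL : forall x, Ltheta T X L (io x) = L x.

Notation Lt := (Ltheta T X L).
Notation R := (vrel T X io L).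

Lemma Lt_pos s : 1 <= Lt s. Proof. unfold Ltheta; lia. Qed.

Lemma supp_lt x s : In x (supp T s) -> Lt (io x) < Lt s.
Proof. intros H. rewrite HL. unfold Ltheta. apply le_n_S. apply maxl_ge. apply in_map; auto. Qed.

Lemma fuel : forall k1 k2 s t, Lt s + Lt t <= k1 -> Lt s + Lt t <= k2 ->
  (vr T X io k1 s t <-> vr T X io k2 s t).
Proof.
  induction k1; intros k2 s t H1 H2. { pose proof (Lt_pos s); lia. }
  destruct k2. { pose proof (Lt_pos s); lia. }
  simpl. unfold fin_lt, fin_le.
  split; intros [[A B]|[A B]]; [left|right|left|right]; split; auto; intros u Hu;
  destruct (B u Hu) as [v [Hv Hr]]; exists v; split; auto.
  - simpl in Hv; destruct Hv as [<-|[]]. apply in_map_iff in Hu; destruct Hu as [x [<- Hx]].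
    pose proof (supp_lt _ _ Hx). apply (IHk1 k2 (io x) t); [lia|lia|exact Hr].
  - simpl in Hu; destruct Hu as [<-|[]]. apply in_map_iff in Hv; destruct Hv as [x [<- Hx]].
    pose proof (supp_lt _ _ Hx). destruct Hr; auto. right; apply (IHk1 k2 s (io x)); [lia|lia|auto].
  - simpl in Hv; destruct Hv as [<-|[]]. apply in_map_iff in Hu; destruct Hu as [x [<- Hx]].
    pose proof (supp_lt _ _ Hx). apply (IHk1 k2 (io x) t); [lia|lia|exact Hr].
  - simpl in Hu; destruct Hu as [<-|[]]. apply in_map_iff in Hv; destruct Hv as [x [<- Hx]].
    pose proof (supp_lt _ _ Hx). destruct Hr; auto. right; apply (IHk1 k2 s (io x)); [lia|lia|auto].
Qed.

Lemma V s t : R s t <->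
  (olt s t /\ (forall x, In x (supp T s) -> R (io x) t)) \/
  (olt t s /\ (exists y, In y (supp T t) /\ (s = io y \/ R s (io y)))).
Proof.
  unfold vrel at 1. remember (Lt s + Lt t) as k. destruct k. { pose proof (Lt_pos s); lia. }
  simpl. unfold fin_lt, fin_le. split.
  - intros [[A B]|[A B]]; [left|right]; split; auto.
    + intros x Hx. destruct (B (io x)) as [v [Hv Hr]]. apply in_map; auto.
      simpl in Hv; destruct Hv as [<-|[]]. pose proof (supp_lt _ _ Hx).
      unfold vrel; apply (fuel k); lia || auto.
    + destruct (B s) as [v [Hv Hr]]; [simpl; auto|]. apply in_map_iff in Hv; destruct Hv as [y [<- Hy]].
      exists y; split; auto. destruct Hr; auto. right. pose proof (supp_lt _ _ Hy).
      unfold vrel; apply (fuel k); lia || auto.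
  - intros [[A B]|[A [y [Hy Hr]]]]; [left|right]; split; auto.
    + intros u Hu. apply in_map_iff in Hu; destruct Hu as [x [<- Hx]]. exists t; split; [simpl; auto|].
      pose proof (supp_lt _ _ Hx). apply (fuel (Lt (io x) + Lt t)); try lia. apply B; auto.
    + intros u Hu. simpl in Hu; destruct Hu as [<-|[]]. exists (io y); split; [apply in_map; auto|].
      destruct Hr; auto. right. pose proof (supp_lt _ _ Hy).
      apply (fuel (Lt s + Lt (io y))); try lia. auto.
Qed.

Lemma R_irrefl s : ~ R s s.
Proof. intros H. apply V in H. destruct H as [[A _]|[A _]]; exact (sl_irrefl (olt_linear _) _ A). Qed.

Inductive Sub (s : T X) : T X -> Prop :=
 | Sub1 : forall x, In x (supp T s) -> Sub s (io x)
 | SubT : forall x u, In x (supp T s) -> Sub (io x) u -> Sub s u.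

Lemma Sub_lt s u : Sub s u -> Lt u < Lt s.
Proof. induction 1. apply supp_lt; auto. pose proof (supp_lt _ _ H); lia. Qed.

Lemma Sub_app s u y : Sub s u -> In y (supp T u) -> Sub s (io y).
Proof. induction 1; intros Hy. eapply SubT; eauto. apply Sub1; auto. eapply SubT; eauto. Qed.

Lemma strong (P : nat -> Prop) : (forall n, (forall m, m < n -> P m) -> P n) -> forall n, P n.
Proof. intros H n. enough (forall m, m <= n -> P m) by auto. induction n; intros m Hm.
  apply H; intros; lia. apply H; intros; apply IHn; lia. Qed.

Lemma NB : forall s k, Sub s k -> ~ (s = k \/ R s k).
Proof.
  intros s k. remember (Lt s + Lt k) as n. revert s k Heqn. induction n as [n IH] using strong.
  intros s k En Hs [E|Hr]. { subst. apply Sub_lt in Hs; lia. }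
  apply V in Hr. destruct Hr as [[A B]|[A [y [Hy Hr]]]].
  - destruct Hs as [x Hx|x u Hx Hs'].
    + exact (R_irrefl _ (B x Hx)).
    + pose proof (supp_lt _ _ Hx). apply (IH (Lt (io x) + Lt u) ltac:(lia) (io x) u eq_refl Hs'). right; auto.
  - assert (Sub s (io y)) by (eapply Sub_app; eauto). pose proof (supp_lt _ _ Hy).
    apply (IH (Lt s + Lt (io y)) ltac:(lia) s (io y) eq_refl H Hr).
Qed.

Lemma Sstar : forall s u, Sub s u -> R u s.
Proof.
  intros s. remember (Lt s) as n. revert s Heqn. induction n as [n IH] using strong.
  intros s En u. remember (Lt u) as m. revert u Heqm. induction m as [m IH2] using strong.
  intros u Em Hs. pose proof (Sub_lt _ _ Hs) as Hlt.
  destruct (sl_total (olt_linear (T X)) s u) as [A|[A|A]].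
  - apply V. right. split; auto. destruct Hs as [x Hx|x u Hx Hs'].
    + exists x; auto.
    + exists x; split; auto. right. pose proof (supp_lt _ _ Hx). eapply IH; [|reflexivity|]; [lia|auto].
  - subst; lia.
  - apply V. left. split; auto. intros x Hx. pose proof (supp_lt _ _ Hx).
    eapply IH2; [|reflexivity|]. lia. eapply Sub_app; eauto.
Qed.

Lemma supp_below x s : In x (supp T s) -> R (io x) s.
Proof. intros; apply Sstar; apply Sub1; auto. Qed.

Lemma R_total : forall s t, R s t \/ s = t \/ R t s.
Proof.
  intros s t. remember (Lt s + Lt t) as n. revert s t Heqn. induction n as [n IH] using strong.
  intros s t En.
  destruct (sl_total (olt_linear (T X)) s t) as [A|[A|A]]; auto.
  - destruct (classic (forall x, In x (supp T s) -> R (io x) t)) as [B|B].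
    + left; apply V; left; auto.
    + apply not_all_ex_not in B; destruct B as [x B]. apply imply_to_and in B; destruct B as [Hx B].
      pose proof (supp_lt _ _ Hx).
      destruct (IH (Lt (io x) + Lt t) ltac:(lia) (io x) t eq_refl) as [C|C]; [contradiction|].
      right; right; apply V; right; split; auto. exists x; split; auto. destruct C; auto.
  - destruct (classic (forall x, In x (supp T t) -> R (io x) s)) as [B|B].
    + right; right; apply V; left; auto.
    + apply not_all_ex_not in B; destruct B as [x B]. apply imply_to_and in B; destruct B as [Hx B].
      pose proof (supp_lt _ _ Hx).
      destruct (IH (Lt s + Lt (io x)) ltac:(lia) s (io x) eq_refl) as [C|[C|C]]; [| |contradiction].
      * left; apply V; right; split; auto. exists x; auto.
      * left; apply V; right; split; auto. exists x; auto.
Qed.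

Lemma R_trans : forall s t r, R s t -> R t r -> R s r.
Proof.
  intros s t r. remember (Lt s + Lt t + Lt r) as n. revert s t r Heqn. induction n as [n IH] using strong.
  intros s t r En H1 H2.
  assert (IH' : forall s' t' r', Lt s' + Lt t' + Lt r' < n -> R s' t' -> R t' r' -> R s' r')
    by (intros; eapply IH; eauto).
  clear IH.
  pose proof (sl_trans (olt_linear (T X))) as Ot.
  pose proof H1 as H1'. pose proof H2 as H2'.
  apply V in H1, H2.
  destruct H1 as [[A1 B1]|[A1 [m [Hm C1]]]]; destruct H2 as [[A2 B2]|[A2 [m2 [Hm2 C2]]]].
  - apply V; left; split; eauto. intros x Hx. pose proof (supp_lt _ _ Hx).
    apply (IH' _ t); auto. lia.
  -
    assert (Hs : R s (io m2)).
    { destruct C2 as [<-|C2]; auto. pose proof (supp_lt _ _ Hm2). apply (IH' _ t); auto; lia. }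
    destruct (sl_total (olt_linear (T X)) s r) as [A|[A|A]].
    + apply V; left; split; auto. intros x Hx. pose proof (supp_lt _ _ Hx).
      apply (IH' _ t); auto; lia.
    + subst r. exfalso. apply (NB s (io m2)); auto. apply Sub1; auto.
    + apply V; right; split; auto. exists m2; auto.
  -
    destruct C1 as [->|C1]; auto. pose proof (supp_lt _ _ Hm).
    apply (IH' _ (io m)); auto; lia.
  - assert (Hs : R s (io m2)).
    { destruct C2 as [<-|C2]; auto. pose proof (supp_lt _ _ Hm2). apply (IH' _ t); auto; lia. }
    apply V; right; split; eauto.
Qed.

Lemma R_linear : strict_linear R.
Proof. split. apply R_irrefl. apply R_trans. apply R_total. Qed.

End Gen.

Section Next.
Variable T : PraeDilator.
Variable B : GBH T.
Variable H : strict_linear (vrelS T B).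

Let X := gX T B.
Let io := gio T B.
Let L := gL T B.
Let HL : forall x, Ltheta T X L (io x) = L x := gs_L _ _ _ _ (ggood T B).

Lemma next_L : forall s, Ltheta T (thetaLO T B H) (nL T B H) (nio T B H s) = nL T B H s.
Proof.
  intros s. unfold nL at 2. unfold Ltheta. f_equal. apply Nat.le_antisymm; apply maxl_set; intros v Hv;
  apply in_map_iff in Hv; destruct Hv as [u [<- Hu]].
  - unfold nio in Hu. apply (supp_nat T) in Hu. destruct Hu as [x [Hx <-]]. simpl.
    unfold nL. change (In (Ltheta T X L (io x)) (map L (supp T s))). rewrite HL. apply in_map; auto.
  - apply in_map_iff. exists (io u). split. unfold nL. apply HL. unfold nio. apply (supp_nat T).
    exists u; split; auto.
Qed.

Lemma next_good : good_sys T (thetaLO T B H) (nio T B H) (nL T B H).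
Proof.
  split. apply next_L.
  intros s t. remember (Ltheta T X L s + Ltheta T X L t) as n. revert s t Heqn.
  induction n as [n IH] using strong. intros s t En.
  change (olt s t) with (vrel T X io L s t).
  rewrite (V T X io L HL). rewrite (V T _ _ _ next_L).
  pose proof (emb_spec (Tmap T (ioemb T B H)) s t) as E1.
  pose proof (emb_spec (Tmap T (ioemb T B H)) t s) as E2.
  unfold nio. rewrite <- E1, <- E2.
  split; intros [[A Bb]|[A [y [Hy C]]]]; [left|right|left|right]; split; auto.
  - intros v Hv. apply (supp_nat T) in Hv. destruct Hv as [x [Hx <-]]. simpl.
    pose proof (supp_lt T X io L HL x s Hx).
    assert (Hm : Ltheta T X L (io x) + Ltheta T X L t < n) by lia. apply (IH _ Hm (io x) t eq_refl). apply Bb; auto.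
  - exists (io y). split. apply (supp_nat T). exists y; auto.
    destruct C as [C|C]; [left; subst; reflexivity|right].
    pose proof (supp_lt T X io L HL y t Hy).
    assert (Hm : Ltheta T X L s + Ltheta T X L (io y) < n) by lia. apply (IH _ Hm s (io y) eq_refl); auto.
  - intros x Hx. pose proof (supp_lt T X io L HL x s Hx).
    assert (Hm : Ltheta T X L (io x) + Ltheta T X L t < n) by lia. apply (IH _ Hm (io x) t eq_refl).
    apply Bb. apply (supp_nat T). exists x; auto.
  - apply (supp_nat T) in Hy. destruct Hy as [x [Hx <-]]. simpl in C.
    exists x; split; auto. destruct C as [C|C]; [left; apply (emb_inj _ _ _ _ _ C)|right].
    pose proof (supp_lt T X io L HL x t Hx).
    assert (Hm : Ltheta T X L s + Ltheta T X L (io x) < n) by lia. apply (IH _ Hm s (io x) eq_refl); auto.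
Qed.
End Next.

Lemma emb_eq (X Y : LO) (f g : emb X Y) : (forall x, f x = g x) -> f = g.
Proof.
  destruct f as [f pf], g as [g pg]; simpl; intros E.
  assert (f = g) by (apply functional_extensionality; auto). subst g.
  f_equal; apply proof_irrelevance.
Qed.

Lemma conn_emb (T : PraeDilator) (B : GBH T) : forall x y, olt x y <-> olt (conn T B x) (conn T B y).
Proof.
  unfold conn, step. destruct (excluded_middle_informative (strict_linear (vrelS T B))) as [H|H]; simpl.
  - unfold conn2, step2. destruct (excluded_middle_informative _) as [G|G]; simpl.
    + intros x y; apply (gs_emb _ _ _ _ (ggood T B)).
    + tauto.
  - tauto.
Qed.

Definition cemb (T : PraeDilator) (B : GBH T) : emb (gX T B) (gX T (step T B)) :=
  mkEmb _ _ (conn T B) (conn_emb T B).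

Lemma step_spec (T : PraeDilator) (B : GBH T) : forall (c : emb (gX T B) (gX T (step T B))),
  (forall x, c x = conn T B x) ->
  exists phi : T (gX T B) -> gX T (step T B),
    (forall x, conn T B x = phi (gio T B x)) /\
    (forall s t, vrelS T B s t <-> olt (phi s) (phi t)) /\
    (forall s, gio T (step T B) (phi s) = Tmap T c s).
Proof.
  pose proof (R_linear T (gX T B) (gio T B) (gL T B) (gs_L _ _ _ _ (ggood T B))) as HH.
  unfold conn, step. destruct (excluded_middle_informative (strict_linear (vrelS T B))) as [H|H]; simpl.
  - unfold conn2, step2. destruct (excluded_middle_informative _) as [G|G]; simpl.
    + intros c Hc. exists (fun s => s). split; [|split]; auto. intros; tauto.
      intros s. unfold nio. replace c with (ioemb T B H); [reflexivity|]. apply emb_eq. intros x; rewrite Hc; reflexivity.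
    + exfalso. apply G. apply next_good.
  - exfalso. apply H. exact HH.
Qed.

Section Lim.
Variable T : PraeDilator.
Notation X n := (gX T (stage T n)).

Fixpoint lift (n d : nat) : X n -> X (d + n) :=
  match d as d0 return X n -> X (d0 + n) with
  | 0 => fun x => x
  | S d' => fun x => conn T (stage T (d' + n)) (lift n d' x)
  end.

Lemma lift_emb n d x y : olt x y <-> olt (lift n d x) (lift n d y).
Proof. induction d; simpl. tauto. rewrite <- conn_emb. auto. Qed.

Lemma lift_inj n d x y : lift n d x = lift n d y -> x = y.
Proof. intros E. destruct (sl_total (olt_linear (X n)) x y) as [h|[h|h]]; auto;
  apply (lift_emb n d) in h; rewrite E in h; exfalso; exact (sl_irrefl (olt_linear _) _ h). Qed.

Lemma conn_inj m x y : conn T (stage T m) x = conn T (stage T m) y -> x = y.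
Proof. apply (emb_inj _ _ (cemb T (stage T m))). Qed.

Lemma lifts_le n x k y : lifts T n x k y -> n <= k.
Proof. induction 1; lia. Qed.

Lemma lifts_lift n x d : lifts T n x (d + n) (lift n d x).
Proof. induction d; simpl. constructor. constructor. auto. Qed.

Lemma lifts_char n x k y : lifts T n x k y ->
  exists d, existT (fun k => X k) k y = existT (fun k => X k) (d + n) (lift n d x).
Proof.
  induction 1. exists 0; reflexivity.
  destruct IHlifts as [d E]. exists (S d).
  exact (f_equal (fun p : {k : nat & X k} => existT (fun k => X k) (S (projT1 p)) (conn T (stage T (projT1 p)) (projT2 p))) E).
Qed.

Lemma lifts_eq n x d y : lifts T n x (d + n) y -> y = lift n d x.
Proof.
  intros H. destruct (lifts_char _ _ _ _ H) as [d' E].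
  assert (d' = d). { apply (f_equal (@projT1 _ _)) in E. simpl in E. lia. } subst d'.
  apply inj_pair2_eq_dec in E; auto. exact Nat.eq_dec.
Qed.

Lemma lifts_uniq n x k y y' : lifts T n x k y -> lifts T n x k y' -> y = y'.
Proof.
  intros H1 H2. pose proof (lifts_le _ _ _ _ H1).
  assert (exists d, k = d + n) as [d ->] by (exists (k - n); lia).
  rewrite (lifts_eq _ _ _ _ H1), (lifts_eq _ _ _ _ H2); reflexivity.
Qed.

Lemma lifts_trans n x k y k' z : lifts T n x k y -> lifts T k y k' z -> lifts T n x k' z.
Proof. intros H1 H2. induction H2; auto. constructor; auto. Qed.

Lemma lifts_ex n x k : n <= k -> exists y, lifts T n x k y.
Proof. intros H. assert (exists d, k = d + n) as [d ->] by (exists (k - n); lia).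
  eexists; apply lifts_lift. Qed.

Lemma lifts_mid n x k y k' z : lifts T n x k y -> lifts T n x k' z -> k <= k' -> lifts T k y k' z.
Proof.
  intros H1 H2 Hk. destruct (lifts_ex k y k' Hk) as [z' Hz'].
  rewrite (lifts_uniq _ _ _ _ _ H2 (lifts_trans _ _ _ _ _ _ H1 Hz')). auto.
Qed.

Lemma lifts_ord k x y k' x' y' : lifts T k x k' x' -> lifts T k y k' y' -> (olt x y <-> olt x' y').
Proof.
  intros H1 H2. pose proof (lifts_le _ _ _ _ H1).
  assert (exists d, k' = d + k) as [d ->] by (exists (k' - k); lia).
  rewrite (lifts_eq _ _ _ _ H1), (lifts_eq _ _ _ _ H2). apply lift_emb.
Qed.

Lemma compat1 n x m y k x1 y1 k' x2 y2 :
  lifts T n x k x1 -> lifts T m y k y1 -> lifts T n x k' x2 -> lifts T m y k' y2 -> k <= k' ->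
  (olt x1 y1 <-> olt x2 y2).
Proof.
  intros A B C D Hk. apply (lifts_ord k); eapply lifts_mid; eauto.
Qed.

Lemma compat n x m y k x1 y1 k' x2 y2 :
  lifts T n x k x1 -> lifts T m y k y1 -> lifts T n x k' x2 -> lifts T m y k' y2 ->
  (olt x1 y1 <-> olt x2 y2).
Proof.
  intros A B C D. destruct (Nat.le_ge_cases k k').
  eapply compat1; eauto. symmetry; eapply compat1; eauto.
Qed.

Notation idx a := (projT1 (proj1_sig a)).
Notation el a := (projT2 (proj1_sig a)).

Lemma BHlt_at (a b : BHcar T) k x y : lifts T (idx a) (el a) k x -> lifts T (idx b) (el b) k y ->
  (BHlt T a b <-> olt x y).
Proof.
  intros Ha Hb. split.
  - intros [k' [x' [y' [A [B C]]]]]. apply (compat _ _ _ _ _ _ _ _ _ _ A B Ha Hb); exact C.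
  - intros C. exists k, x, y; auto.
Qed.

Lemma fresh_eq1 n x m y k z : lifts T n x k z -> lifts T m y k z -> fresh T n x -> fresh T m y -> n <= m ->
  existT (fun k => X k) n x = existT (fun k => X k) m y.
Proof.
  intros A B Fx Fy Hnm. destruct (Nat.eq_dec n m) as [<-|Hne].
  - pose proof (lifts_le _ _ _ _ A).
    assert (exists d, k = d + n) as [d ->] by (exists (k - n); lia).
    rewrite (lifts_eq _ _ _ _ A) in B. apply lifts_eq in B. apply lift_inj in B. subst; reflexivity.
  - destruct m as [|m']; [lia|]. exfalso.
    destruct (lifts_ex n x m' ltac:(lia)) as [w Hw].
    pose proof (lifts_step T n x m' w Hw) as Hw'.
    pose proof (lifts_mid _ _ _ _ _ _ Hw' A ltac:(pose proof (lifts_le _ _ _ _ B); lia)) as C.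
    pose proof (lifts_le _ _ _ _ B).
    assert (exists d, k = d + S m') as [d ->] by (exists (k - S m'); lia).
    apply lifts_eq in C. apply lifts_eq in B. rewrite C in B. apply lift_inj in B.
    exact (Fy w B).
Qed.

Lemma BHcar_eq (a b : BHcar T) :
  existT (fun k => X k) (idx a) (el a) = existT (fun k => X k) (idx b) (el b) -> a = b.
Proof.
  destruct a as [[n x] pa], b as [[m y] pb]; simpl. intros E.
  assert (n = m) by (apply (f_equal (@projT1 _ _)) in E; exact E). subst m.
  apply inj_pair2_eq_dec in E; [|exact Nat.eq_dec]. subst y. f_equal. apply proof_irrelevance.
Qed.

Lemma BH_linear : strict_linear (BHlt T).
Proof.
  split.
  - intros a [k [x [y [A [B C]]]]]. rewrite (lifts_uniq _ _ _ _ _ A B) in C.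
    exact (sl_irrefl (olt_linear _) _ C).
  - intros a b c [k1 [x1 [y1 [A1 [B1 C1]]]]] [k2 [y2 [z2 [B2 [D2 C2]]]]].
    set (k := Nat.max k1 k2).
    destruct (lifts_ex _ (el a) k ltac:(pose proof (lifts_le _ _ _ _ A1); lia)) as [xa Ha].
    destruct (lifts_ex _ (el b) k ltac:(pose proof (lifts_le _ _ _ _ B1); lia)) as [xb Hb].
    destruct (lifts_ex _ (el c) k ltac:(pose proof (lifts_le _ _ _ _ D2); lia)) as [xc Hc].
    exists k, xa, xc. split; [|split]; auto.
    apply (sl_trans (olt_linear _)) with xb.
    + apply (compat _ _ _ _ _ _ _ _ _ _ A1 B1 Ha Hb); auto.
    + apply (compat _ _ _ _ _ _ _ _ _ _ B2 D2 Hb Hc); auto.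
  - intros a b. set (k := Nat.max (idx a) (idx b)).
    destruct (lifts_ex _ (el a) k ltac:(lia)) as [xa Ha].
    destruct (lifts_ex _ (el b) k ltac:(lia)) as [xb Hb].
    destruct (sl_total (olt_linear (X k)) xa xb) as [h|[h|h]].
    + left; exists k, xa, xb; auto.
    + right; left. subst xb. apply BHcar_eq.
      destruct (Nat.le_ge_cases (idx a) (idx b)).
      * eapply fresh_eq1; eauto; apply (proj2_sig a) || apply (proj2_sig b).
      * symmetry; eapply fresh_eq1; eauto; apply (proj2_sig a) || apply (proj2_sig b).
    + right; right; exists k, xb, xa; auto.
Qed.

End Lim.

Section Coll.
Variable T : PraeDilator.
Notation X n := (gX T (stage T n)).
Notation idx a := (projT1 (proj1_sig a)).
Notation el a := (projT2 (proj1_sig a)).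

Fixpoint norm (n : nat) : X n -> BHcar T :=
  match n as n0 return X n0 -> BHcar T with
  | 0 => fun x => exist (fun p : {k : nat & X k} => fresh T (projT1 p) (projT2 p)) (existT (fun k => X k) 0 x) I
  | S m => fun x =>
     match excluded_middle_informative (exists y, conn T (stage T m) y = x) with
     | left e => norm m (proj1_sig (constructive_indefinite_description _ e))
     | right ne => exist (fun p : {k : nat & X k} => fresh T (projT1 p) (projT2 p)) (existT (fun k => X k) (S m) x) (fun y E => ne (ex_intro _ y E))
     end
  end.

Lemma norm_lifts n x : lifts T (idx (norm n x)) (el (norm n x)) n x.
Proof.
  induction n; simpl. constructor.
  destruct (excluded_middle_informative _) as [e|e]; simpl.
  - destruct (constructive_indefinite_description _ e) as [y Hy]; simpl. rewrite <- Hy.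
    constructor. apply IHn.
  - constructor.
Qed.

Lemma norm_conn m x : norm (S m) (conn T (stage T m) x) = norm m x.
Proof.
  simpl. destruct (excluded_middle_informative _) as [e|e].
  - destruct (constructive_indefinite_description _ e) as [y Hy]; simpl. apply conn_inj in Hy. subst; auto.
  - exfalso; apply e; eauto.
Qed.

Lemma norm_self (a : BHcar T) : norm (idx a) (el a) = a.
Proof.
  destruct a as [[n x] p]; simpl. destruct n; simpl.
  - f_equal. destruct p; reflexivity.
  - destruct (excluded_middle_informative _) as [e|e].
    + exfalso. destruct e as [y Hy]. exact (p y Hy).
    + f_equal. apply proof_irrelevance.
Qed.

Lemma norm_lifts_eq n x k y : lifts T n x k y -> norm k y = norm n x.
Proof. induction 1; auto. rewrite norm_conn; auto. Qed.

Lemma norm_emb n x y : olt x y <-> BHlt T (norm n x) (norm n y).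
Proof. symmetry. apply BHlt_at; apply norm_lifts. Qed.

Variable H : strict_linear (BHlt T).
Let BHL := @mkLO (BHcar T) (BHlt T) H.

Definition J n : emb (X n) BHL := @mkEmb (X n) BHL (norm n) (norm_emb n).

Lemma decomp (s : T BHL) n : (forall a, In a (supp T s) -> idx a <= n) ->
  exists s', Tmap T (J n) s' = s.
Proof.
  intros Hb. destruct (supp_cond T BHL s) as [t Ht].
  set (P := fun x : BHL => In x (supp T s)).
  assert (ex : forall a : subLO BHL P, exists y : X n, norm n y = proj1_sig a).
  { intros [a Pa]; simpl. destruct (lifts_ex T _ (el a) n (Hb a Pa)) as [y Hy]. exists y.
    rewrite (norm_lifts_eq _ _ _ _ Hy). apply norm_self. }
  set (e := fun a => proj1_sig (constructive_indefinite_description _ (ex a))).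
  assert (He : forall a, norm n (e a) = proj1_sig a).
  { intros a; unfold e. destruct (constructive_indefinite_description _ _); auto. }
  assert (Eo : forall a b : subLO BHL P, olt a b <-> olt (e a) (e b)).
  { intros a b. rewrite (norm_emb n). rewrite !He. simpl. unfold sub_lt. simpl. tauto. }
  exists (Tmap T (@mkEmb _ _ e Eo) t). rewrite <- Tmap_comp.
  assert (Ec : emb_comp (J n) (@mkEmb _ _ e Eo) = sub_incl BHL P) by (apply emb_eq; intros a; simpl; apply He).
  rewrite Ec. exact Ht.
Qed.

Definition phiP n := step_spec T (stage T n) (cemb T (stage T n)) (fun _ => eq_refl).
Definition phi n := proj1_sig (constructive_indefinite_description _ (phiP n)).
Lemma phi_spec n :
    (forall x, conn T (stage T n) x = phi n (gio T (stage T n) x)) /\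
    (forall s t, vrelS T (stage T n) s t <-> olt (phi n s) (phi n t)) /\
    (forall s, gio T (stage T (S n)) (phi n s) = Tmap T (cemb T (stage T n)) s).
Proof. unfold phi. destruct (constructive_indefinite_description _ _); auto. Qed.

Definition Nof (s : T BHL) := maxl (map (fun a => idx a) (supp T s)).
Lemma Nof_bound (s : T BHL) : forall a, In a (supp T s) -> idx a <= Nof s.
Proof. intros a Ha. apply maxl_ge. apply in_map_iff. eauto. Qed.

Definition theta (s : T BHL) : BHL :=
  norm (S (Nof s)) (phi (Nof s) (proj1_sig (constructive_indefinite_description _ (decomp s (Nof s) (Nof_bound s))))).

Fixpoint Lam n d : emb (X n) (X (d + n)) :=
  match d as d0 return emb (X n) (X (d0 + n)) with
  | 0 => emb_id (X n)
  | S d' => emb_comp (cemb T (stage T (d' + n))) (Lam n d')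
  end.

Lemma Lam_lift n d x : Lam n d x = lift T n d x.
Proof. induction d; simpl; auto. rewrite IHd; reflexivity. Qed.

Lemma Lam_phi n s1 : forall d, norm (S (d + n)) (phi (d + n) (Tmap T (Lam n d) s1)) = norm (S n) (phi n s1).
Proof.
  induction d.
  - simpl. rewrite Tmap_id. reflexivity.
  - change (Lam n (S d)) with (emb_comp (cemb T (stage T (d + n))) (Lam n d)).
    rewrite Tmap_comp. set (u := Tmap T (Lam n d) s1).
    destruct (phi_spec (d + n)) as [_ [_ G3]].
    destruct (phi_spec (S (d + n))) as [G1 _].
    rewrite <- G3. change (S d + n) with (S (d + n)). rewrite <- G1.
    rewrite norm_conn. exact IHd.
Qed.

Lemma theta_ind1 n m s1 s2 : n <= m -> Tmap T (J n) s1 = Tmap T (J m) s2 ->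
  norm (S n) (phi n s1) = norm (S m) (phi m s2).
Proof.
  intros Hnm E. assert (exists d, m = d + n) as [d ->] by (exists (m - n); lia).
  assert (E2 : Tmap T (J (d + n)) (Tmap T (Lam n d) s1) = Tmap T (J n) s1).
  { rewrite <- Tmap_comp.
    assert (Ec : emb_comp (J (d + n)) (Lam n d) = J n).
    { apply emb_eq. intros x. simpl. rewrite Lam_lift. apply norm_lifts_eq. apply lifts_lift. }
    rewrite Ec. reflexivity. }
  rewrite <- E2 in E. apply emb_inj in E. rewrite <- E. symmetry. apply Lam_phi.
Qed.

Lemma theta_char n s' : theta (Tmap T (J n) s') = norm (S n) (phi n s').
Proof.
  unfold theta. destruct (constructive_indefinite_description _ _) as [s2 E]. simpl.
  destruct (Nat.le_ge_cases n (Nof (Tmap T (J n) s'))).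
  - symmetry; apply theta_ind1; auto.
  - apply theta_ind1; auto.
Qed.

Lemma theta_collapse : BH_collapse T BHL theta.
Proof.
  split.
  - intros s t Hst Hsupp.
    set (n := Nat.max (Nof s) (Nof t)).
    destruct (decomp s n ltac:(intros a Ha; pose proof (Nof_bound s a Ha); lia)) as [s' Es].
    destruct (decomp t n ltac:(intros a Ha; pose proof (Nof_bound t a Ha); lia)) as [t' Et].
    clearbody n. subst s t. rewrite !theta_char in *.
    apply norm_emb. destruct (phi_spec n) as [G1 [G2 G3]]. apply G2.
    unfold vrelS. apply (V T _ _ _ (gs_L _ _ _ _ (ggood T (stage T n)))). left. split.
    + apply (emb_spec (Tmap T (J n))); exact Hst.
    + intros x Hx. apply G2. rewrite <- G1. apply (norm_emb (S n)). rewrite norm_conn.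
      destruct (Hsupp (J n x)) as [b [Hb Hlt]].
      * apply (supp_nat T). exists x; auto.
      * simpl in Hb. destruct Hb as [<-|[]]. exact Hlt.
  - intros s a Ha. exists (theta s). split; [simpl; auto|].
    destruct (decomp s (Nof s) (Nof_bound s)) as [s' Es].
    revert Ha. rewrite <- Es. intros Ha.
    rewrite theta_char. apply (supp_nat T) in Ha. destruct Ha as [x [Hx <-]].
    change (BHlt T (norm _ x) (norm (S (Nof s)) (phi (Nof s) s'))).
    rewrite <- (norm_conn (Nof s) x). apply norm_emb.
    destruct (phi_spec (Nof s)) as [G1 [G2 G3]].
    rewrite G1. apply G2. apply (supp_below T _ _ _ (gs_L _ _ _ _ (ggood T _))). auto.
Qed.
End Coll.
Theorem theorem4p2 (T : PraeDilator) : BH_fixed_point T (BH T).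
Proof.
  unfold BH. destruct (excluded_middle_informative (strict_linear (BHlt T))) as [H|H].
  - exists (theta T H). apply theta_collapse.
  - exfalso. apply H. apply BH_linear.
Qed.
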